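(* Let $G$ be an equimatchable graph and let $k,\ell$ be integers with $1\leq \ell<k\leq\nu(G)$. Then $I(G)^{[k]}:I(G)^{[\ell]}=I(G)^{[k]}$.
   Context: A finite simple graph is equimatchable if every maximal (by inclusion) matching is a maximum matching. Vertices are identified with variables of $S=K[x_1,\ldots,x_n]$ ($K$ a field), edges with degree-2 monomials. $I(G)^{[k]}$ is the ideal generated by all products $e_1\cdots e_k$ over $k$-matchings of $G$; $I(G)^{[1]}=I(G)$ is the edge ideal. $\nu(G)$ is the matching number. *)

(* Defs.v *)
From HB Require Import structures.
From mathcomp Require Import all_boot all_order all_algebra.
Set Implicit Arguments. Unset Strict Implicit. Unset Printing Implicit Defensive.
Import GRing.Theory.
Local Open Scope ring_scope.

(* S = K[x_0, ..., x_{n-1}] realized as iterated univariate polynomials: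
   mpoly K 0 = K,  mpoly K (n+1) = (mpoly K n)[x_n]. *)
Fixpoint mpoly (K : fieldType) (n : nat) : comNzRingType :=
  match n with
  | 0 => K
  | n'.+1 => {poly (mpoly K n')}
  end.

Fixpoint xvar (K : fieldType) (n : nat) (i : nat) : mpoly K n :=
  match n return mpoly K n with
  | 0 => 0
  | n'.+1 => if i == n' then ('X : {poly (mpoly K n')})
             else ((xvar K n' i)%:P : {poly (mpoly K n')})
  end.

Definition simple_graph (n : nat) (e : rel 'I_n) : Prop :=
  irreflexive e /\ symmetric e.

Definition is_matching (n : nat) (e : rel 'I_n) (M : {set 'I_n * 'I_n}) : bool :=
  [forall p in M, (p.1 < p.2)%N && e p.1 p.2] &&
  [forall p in M, forall q in M,
      (p != q) ==> [&& p.1 != q.1, p.1 != q.2, p.2 != q.1 & p.2 != q.2]].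

Definition matching_number (n : nat) (e : rel 'I_n) : nat :=
  \max_(M : {set 'I_n * 'I_n} | is_matching e M) #|M|.

Definition maximal_matching (n : nat) (e : rel 'I_n) (M : {set 'I_n * 'I_n}) : Prop :=
  is_matching e M /\
  forall M' : {set 'I_n * 'I_n}, is_matching e M' -> M \subset M' -> M' = M.

Definition maximum_matching (n : nat) (e : rel 'I_n) (M : {set 'I_n * 'I_n}) : Prop :=
  is_matching e M /\ #|M| = matching_number e.

Definition equimatchable (n : nat) (e : rel 'I_n) : Prop :=
  forall M, maximal_matching e M -> maximum_matching e M.

Definition matching_monomial (K : fieldType) (n : nat) (M : {set 'I_n * 'I_n})
  : mpoly K n :=
  \prod_(p in M) (xvar K n p.1 * xvar K n p.2).

(* membership in I(G)^[k]: the ideal generated by the monomials of the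
   k-matchings of G *)
Definition in_sqf_power (K : fieldType) (n : nat) (e : rel 'I_n) (k : nat)
  (f : mpoly K n) : Prop :=
  exists c : {set 'I_n * 'I_n} -> mpoly K n,
    f = \sum_(M : {set 'I_n * 'I_n} | is_matching e M && (#|M| == k))
          c M * matching_monomial K M.

Definition in_colon (K : fieldType) (n : nat) (e : rel 'I_n) (k l : nat)
  (f : mpoly K n) : Prop :=
  forall g : mpoly K n, in_sqf_power e l g -> in_sqf_power e k (f * g).

(* Main.v *)
Require Import Defs.
From mathcomp Require Import all_boot all_order all_algebra.
From mathcomp Require Import ring zify.
From Stdlib Require Import Classical.
Set Implicit Arguments. Unset Strict Implicit. Unset Printing Implicit Defensive.
Import GRing.Theory.

Module AlgM.
Local Open Scope ring_scope.

Section Alg.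
Variable K : fieldType.

Fixpoint coefm (n : nat) : mpoly K n -> (nat -> nat) -> K :=
  match n return mpoly K n -> (nat -> nat) -> K with
  | 0 => fun f _ => f
  | n'.+1 => fun f a => coefm (n := n') ((f : {poly mpoly K n'})`_(a n')) a
  end.

Fixpoint mon (n : nat) (a : nat -> nat) : mpoly K n :=
  match n return mpoly K n with
  | 0 => 1
  | n'.+1 => ((mon n' a)%:P * 'X^(a n') : {poly mpoly K n'})
  end.

Fixpoint cst (n : nat) (c : K) : mpoly K n :=
  match n return mpoly K n with
  | 0 => c
  | n'.+1 => ((cst n' c)%:P : {poly mpoly K n'})
  end.

Lemma coefmD n (f g : mpoly K n) a : coefm (f + g) a = coefm f a + coefm g a.
Proof. elim: n f g => [//|n IH] f g /=. by rewrite coefD IH. Qed.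

Lemma coefm0 n a : coefm (0 : mpoly K n) a = 0.
Proof. elim: n => [//|n IH] /=. by rewrite coef0 IH. Qed.

Lemma coefm_sum n (I : Type) (r : seq I) (P : pred I) (F : I -> mpoly K n) a :
  coefm (\sum_(i <- r | P i) F i) a = \sum_(i <- r | P i) coefm (F i) a.
Proof.
by apply: (big_morph (fun f => coefm f a)) => [f g|]; rewrite ?coefmD ?coefm0.
Qed.

Lemma coefm_ext n (f : mpoly K n) a b : (forall j, (j < n)%N -> a j = b j) ->
  coefm f a = coefm f b.
Proof.
elim: n f => [//|n IH] f H /=. rewrite H // IH // => j Hj; apply: H; exact: ltnW.
Qed.

Lemma mon_ext n a b : (forall j, (j < n)%N -> a j = b j) -> mon n a = mon n b.
Proof.
elim: n => [//|n IH] H /=. rewrite H // IH // => j Hj; apply: H; exact: ltnW.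
Qed.

Lemma mon_add n a b : mon n (fun j => a j + b j)%N = mon n a * mon n b.
Proof.
elim: n => [|n IH] /=; first by rewrite mulr1.
rewrite IH polyCM exprD. ring.
Qed.

Lemma mon0 n : mon n (fun _ => 0%N) = 1.
Proof. elim: n => [//|n IH] /=. by rewrite IH expr0 mulr1. Qed.

Lemma coefm_mul_mon n (f : mpoly K n) a b :
  (forall j, (j < n)%N -> b j <= a j)%N ->
  coefm (f * mon n b) a = coefm f (fun j => a j - b j)%N.
Proof.
elim: n f => [|n IH] f H /=; first by rewrite mulr1.
rewrite mulrA coefMXn ltnNge H // /= coefMC.
rewrite IH // => j Hj; apply: H; exact: ltnW.
Qed.

Lemma coefm_mul_mon_nz n (f : mpoly K n) a b :
  coefm (f * mon n b) a != 0 -> forall j, (j < n)%N -> (b j <= a j)%N.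
Proof.
elim: n f => [//|n IH] f /=.
rewrite mulrA coefMXn. case: ltnP => Hab; first by rewrite coefm0 eqxx.
rewrite coefMC => /IH H j; rewrite ltnS leq_eqVlt => /orP [/eqP -> //|]; exact: H.
Qed.

Lemma xvar_mon n i : (i < n)%N -> xvar K n i = mon n (fun j => (j == i) : nat).
Proof.
elim: n => [//|n IH] Hi /=.
case: eqP => [->|/eqP Hne].
  rewrite eqxx expr1 (@mon_ext n _ (fun _ => 0%N)) ?mon0 ?mul1r // => j Hj.
  by rewrite (ltn_eqF Hj).
rewrite eq_sym (negbTE Hne) expr0 mulr1 IH //.
by move: Hi; rewrite ltnS leq_eqVlt (negbTE Hne).
Qed.

Lemma coefm_cst n c (f : mpoly K n) a : coefm (cst n c * f) a = c * coefm f a.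
Proof. elim: n f => [//|n IH] f /=. by rewrite coefCM IH. Qed.

Inductive mspan n (P : (nat -> nat) -> Prop) : mpoly K n -> Prop :=
| span0 : mspan P 0
| spanT c a : P a -> mspan P (cst n c * mon n a)
| spanD f g : mspan P f -> mspan P g -> mspan P (f + g).

Lemma span_lift n (P : (nat -> nat) -> Prop) i (f : mpoly K n) :
  mspan (fun a => P (fun j => if j == n then i else a j)) f ->
  mspan (n := n.+1) P ((f%:P : {poly mpoly K n}) * 'X^i).
Proof.
elim => [|c a Pa|g h _ Hg _ Hh].
- rewrite /= mul0r. exact: span0.
- set a' := (fun j => if j == n then i else a j).
  have -> : (cst n c * mon n a)%:P * 'X^i = cst n.+1 c * mon n.+1 a'.
    rewrite /= /a' eqxx polyCM (@mon_ext n _ a) ?mulrA // => j Hj.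
    by rewrite (ltn_eqF Hj).
  exact: spanT.
- rewrite polyCD mulrDl. exact: spanD.
Qed.

Lemma span_of_coef n (P : (nat -> nat) -> Prop) (f : mpoly K n) :
  (forall a, coefm f a != 0 -> P a) -> mspan P f.
Proof.
elim: n P f => [|n IH] P f H.
  have [->|nz] := eqVneq f 0; first exact: span0.
  have -> : f = cst 0 f * mon 0 (fun _ => 0%N) by rewrite /= mulr1.
  apply: spanT; exact: H.
have -> : f = \sum_(i < size (f : {poly mpoly K n})) ((f : {poly mpoly K n})`_i)%:P * 'X^i.
  rewrite -[LHS]coefK poly_def; apply: eq_bigr => i _; by rewrite mul_polyC.
apply: (big_ind (mspan P)); [exact: span0| exact: spanD|].
move=> i _; apply: span_lift; apply: IH => a Ha; apply: H => /=.
rewrite eqxx. rewrite (@coefm_ext n _ _ a) // => j Hj. by rewrite (ltn_eqF Hj).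
Qed.


End Alg.

End AlgM.
Import AlgM.

Module Alg2M.
Local Open Scope ring_scope.

Section M.
Variable n : nat.
Variable e : rel 'I_n.
Implicit Types M N L : {set 'I_n * 'I_n}.

Definition disj (p q : 'I_n * 'I_n) :=
  [&& p.1 != q.1, p.1 != q.2, p.2 != q.1 & p.2 != q.2].

Lemma match_edge M p : is_matching e M -> p \in M -> (p.1 < p.2)%N && e p.1 p.2.
Proof. by case/andP => /forall_inP H _ /H. Qed.

Lemma match_disj M p q : is_matching e M -> p \in M -> q \in M -> p != q -> disj p q.
Proof. case/andP => _ /forall_inP H /H /forall_inP H' /H' /implyP. exact. Qed.

Lemma matchingI M : (forall p, p \in M -> (p.1 < p.2)%N && e p.1 p.2) ->
  (forall p q, p \in M -> q \in M -> p != q -> disj p q) -> is_matching e M.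
Proof.
move=> H1 H2; apply/andP; split.
  apply/forall_inP => p Hp; exact: H1.
apply/forall_inP => p Hp; apply/forall_inP => q Hq; apply/implyP; exact: H2.
Qed.

Lemma match_sub M N : is_matching e M -> N \subset M -> is_matching e N.
Proof.
move=> HM /subsetP sNM; apply: matchingI => [p Hp|p q Hp Hq].
  by apply: match_edge HM _; apply: sNM.
by apply: (match_disj HM); apply: sNM.
Qed.

Definition cov M (j : nat) : nat :=
  has (fun p : 'I_n * 'I_n => (nat_of_ord p.1 == j) || (nat_of_ord p.2 == j)) (enum M).

Lemma disj_nat p q j : disj p q ->
  (nat_of_ord p.1 == j) || (nat_of_ord p.2 == j) ->
  ~~ ((nat_of_ord q.1 == j) || (nat_of_ord q.2 == j)).
Proof.
case/and4P => a b c d; case/orP => /eqP <-; rewrite !(inj_eq val_inj) negb_or;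
  rewrite !(eq_sym q.1) !(eq_sym q.2); apply/andP; split => //.
Qed.

Variable K : fieldType.

Lemma prod_mon (s : seq ('I_n * 'I_n)) : uniq s ->
  (forall p, p \in s -> p.1 != p.2) ->
  (forall p q, p \in s -> q \in s -> p != q -> disj p q) ->
  \prod_(p <- s) (xvar K n p.1 * xvar K n p.2) =
  mon K n (fun j => has (fun p : 'I_n * 'I_n => (nat_of_ord p.1 == j) || (nat_of_ord p.2 == j)) s).
Proof.
elim: s => [|p s IH] /=.
  move=> _ _ _; rewrite big_nil -(mon0 K n); exact: mon_ext.
case/andP => pns us Hne Hd.
rewrite big_cons IH //; first last.
- move=> a b Ha Hb; apply: Hd; by rewrite inE ?Ha ?Hb orbT.
- move=> a Ha; apply: Hne; by rewrite inE Ha orbT.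
rewrite !xvar_mon ?ltn_ord // -!mon_add; apply: mon_ext => j Hj; rewrite !(eq_sym j).
have np := Hne p (mem_head _ _).
have hs : forall q, q \in s -> disj p q.
  move=> q Hq; apply: Hd; rewrite ?inE ?Hq ?orbT ?eqxx //.
  by apply/eqP => Epq; move: pns; rewrite Epq Hq.
have [Ej|Nj] := eqVneq (nat_of_ord p.1) j.
  have -> : has (fun q : 'I_n * 'I_n => (nat_of_ord q.1 == j) || (nat_of_ord q.2 == j)) s = false.
    apply/hasP => -[q Hq H]; move: (disj_nat (hs q Hq) (j := j)).
    by rewrite Ej eqxx /= H => /(_ isT).
  have -> : (nat_of_ord p.2 == j) = false.
    by apply/negbTE; rewrite -Ej; move: np; apply: contra => /eqP /val_inj ->.
  by [].
have [Ej2|Nj2] := eqVneq (nat_of_ord p.2) j.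
  have -> : has (fun q : 'I_n * 'I_n => (nat_of_ord q.1 == j) || (nat_of_ord q.2 == j)) s = false.
    apply/hasP => -[q Hq H]; move: (disj_nat (hs q Hq) (j := j)).
    by rewrite Ej2 eqxx orbT /= H => /(_ isT).
  by [].
by case: has.
Qed.

Lemma mm_mon M : is_matching e M -> matching_monomial K M = mon K n (cov M).
Proof.
move=> HM; rewrite /matching_monomial -big_enum prod_mon ?enum_uniq //.
- move=> p; rewrite mem_enum => /(match_edge HM) /andP [H _].
  by apply/eqP => E; move: H; rewrite E ltnn.
- move=> p q; rewrite !mem_enum; exact: match_disj.
Qed.

End M.

End Alg2M.
Import Alg2M.

Module CombM.

Section C.
Variable n : nat.
Variable e : rel 'I_n.
Implicit Types M N L A B : {set 'I_n * 'I_n}.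
Implicit Types S X : {set 'I_n}.

Definition withinb M S : bool := [forall p in M, (p.1 \in S) && (p.2 \in S)].
Definition Vx M : {set 'I_n} := [set v | [exists p in M, (p.1 == v) || (p.2 == v)]].

Lemma withinP M S p : withinb M S -> p \in M -> (p.1 \in S) && (p.2 \in S).
Proof. by move/forall_inP => H /H. Qed.

Lemma withinI M S : (forall p, p \in M -> (p.1 \in S) && (p.2 \in S)) -> withinb M S.
Proof. by move=> H; apply/forall_inP. Qed.

Lemma VxP M v : reflect (exists2 p, p \in M & (p.1 == v) || (p.2 == v)) (v \in Vx M).
Proof. rewrite inE; exact: exists_inP. Qed.

Lemma match0 : is_matching e set0.
Proof. by apply: matchingI => p; rewrite in_set0. Qed.

Lemma ext_maximal B : is_matching e B -> exists M, maximal_matching e M /\ B \subset M.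
Proof.
move=> HB.
have P0 : is_matching e B && (B \subset B) by rewrite HB subxx.
case: (@arg_maxnP _ B (fun M => is_matching e M && (B \subset M)) (fun M => #|M|) P0) => M /andP [HM HBM] Hmax.
exists M; split => //; split => // M' HM' HMM'.
have := Hmax M' (introT andP (conj HM' (subset_trans HBM HMM'))).
by move=> Hc; apply/eqP; rewrite eq_sym eqEcard HMM' /=; exact: Hc.
Qed.

Lemma subset_card B A m : B \subset A -> (#|B| <= m <= #|A|)%N ->
  exists N, [/\ B \subset N, N \subset A & #|N| = m].
Proof.
move=> sBA /andP [H1 H2].
have [d Hd] : exists d, m = (#|B| + d)%N by exists (m - #|B|)%N; lia.
subst m; clear H1; elim: d H2 => [|d IH] H2; first by exists B; rewrite addn0.
have [N [sBN sNA cN]] : exists N, [/\ B \subset N, N \subset A & #|N| = (#|B| + d)%N] by apply: IH; lia.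
have : (0 < #|A :\: N|)%N by rewrite cardsD (setIidPr sNA); lia.
rewrite card_gt0 => /set0Pn [x /setDP [xA xN]].
exists (x |: N); split.
- exact: subset_trans sBN (subsetUr _ _).
- by rewrite subUset sub1set xA.
- by rewrite cardsU1 xN cN; lia.
Qed.

Definition fo S (p : 'I_n * 'I_n) : 'I_n := if p.1 \in S then p.2 else p.1.

Lemma crude S M0 N L :
  is_matching e L -> withinb L (S :|: Vx N) ->
  (forall p, p \in N -> (p.1 \in S) || (p.2 \in S)) ->
  M0 \subset N -> withinb M0 S ->
  (forall L', is_matching e L' -> withinb L' S -> #|L'| <= #|M0|)%N ->
  (#|L| <= #|N|)%N.
Proof.
move=> HL wL hA sM0N wM0 maxM0.
pose W := [set p : 'I_n * 'I_n | (p.1 \in S) && (p.2 \in S)].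
rewrite -(cardsID W L).
have h1 : (#|L :&: W| <= #|M0|)%N.
  apply: maxM0; first exact: match_sub HL (subsetIl _ _).
  by apply: withinI => p; rewrite inE inE => /andP [_].
have inj : {in L :\: W &, injective (fo S)}.
  move=> p q /setDP [Hp _] /setDP [Hq _] E; apply/eqP; apply/negPn/negP => Hne.
  move: (match_disj HL Hp Hq Hne) E; rewrite /disj /fo.
  by case: ifP; case: ifP => _ _ /and4P [a b c d] E; move: a b c d; rewrite E eqxx.
have h2 : [set fo S x | x in L :\: W] \subset Vx N :\: S.
  apply/subsetP => v /imsetP [p /setDP [Hp HpW] ->].
  move: (withinP wL Hp) => /andP [k1 k2].
  have HpW' : ~~ ((p.1 \in S) && (p.2 \in S)) by move: HpW; rewrite inE.
  apply/setDP; rewrite /fo; case: ifP => H1.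
    have h2S : p.2 \notin S by move: HpW'; rewrite H1.
    by split => //; move: k2; rewrite in_setU (negbTE h2S).
  by split; [move: k1; rewrite in_setU H1 | rewrite H1].
have h3 : Vx N :\: S \subset [set fo S x | x in N :\: M0].
  apply/subsetP => v /setDP [/VxP [q Hq Hqv] vS]; apply/imsetP; exists q.
    apply/setDP; split => //; apply/negP => /(withinP wM0) /andP [a b].
    by case/orP: Hqv => /eqP E; move: vS; rewrite -E ?a ?b.
  rewrite /fo; case/orP: Hqv => /eqP E.
    by move: vS; rewrite -E => /negbTE ->.
  have := hA q Hq; case: ifP => // _; by move: vS; rewrite -E => /negbTE ->.
have h4 := subset_leq_card h2.
have h5 := subset_leq_card h3.
have h6 := leq_imset_card (fo S) (N :\: M0).
have h7 : #|N :\: M0| = (#|N| - #|M0|)%N by rewrite cardsD (setIidPr sM0N).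
have h8 := subset_leq_card sM0N.
rewrite (card_in_imset inj) in h4.
have h9 : (#|L :\: W| <= #|N| - #|M0|)%N by rewrite -h7; apply: leq_trans h4 (leq_trans h5 h6).
apply: leq_trans (leq_add h1 h9) _; by rewrite subnKC.
Qed.

Lemma disj_sep X p q : (p.1 \in X) && (p.2 \in X) -> (q.1 \notin X) && (q.2 \notin X) ->
  disj p q && disj q p.
Proof.
case/andP => a b /andP [c d]; rewrite /disj.
by apply/andP; split; apply/and4P; split; apply/negP => /eqP E;
  rewrite ?E in a b c d; move: c d; rewrite ?a ?b.
Qed.

Lemma unionb S N M L :
  equimatchable e -> is_matching e M -> #|M| = matching_number e ->
  N \subset M -> (forall p, p \in M -> (p.1 \in S) || (p.2 \in S) -> p \in N) ->
  is_matching e L -> withinb L (S :|: Vx N) -> (#|L| <= #|N|)%N.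
Proof.
move=> heq HM cM sNM hA HL wL.
set X := S :|: Vx N.
have out : forall q, q \in M :\: N -> (q.1 \notin X) && (q.2 \notin X).
  move=> q /setDP [qM qN].
  have nS : ~~ ((q.1 \in S) || (q.2 \in S)) by apply/negP => /(hA q qM); apply/negP.
  rewrite negb_or in nS; case/andP: nS => n1 n2.
  have nV : forall v, (q.1 == v) || (q.2 == v) -> v \notin Vx N.
    move=> v Hv; apply/negP => /VxP [r rN Hr].
    have rq : q != r by apply/negP => /eqP E; move: qN; rewrite E rN.
    move: (match_disj HM qM (subsetP sNM r rN) rq); rewrite /disj.
    case/and4P => a b c d.
    by case/orP: Hv => /eqP Ev; case/orP: Hr => /eqP E; subst v; move: a b c d; rewrite E eqxx.
  by rewrite !in_setU negb_or n1 nV ?eqxx // negb_or n2 nV // eqxx orbT.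
set U := L :|: (M :\: N).
have HU : is_matching e U.
  apply: matchingI.
    move=> p; rewrite in_setU => /orP [Hp|/setDP [Hp _]].
      exact: match_edge HL Hp.
    exact: match_edge HM Hp.
  move=> p q; rewrite !in_setU => /orP [Hp|Hp] /orP [Hq|Hq] Hne.
  - exact: match_disj HL Hp Hq Hne.
  - by case/andP: (disj_sep (withinP wL Hp) (out q Hq)).
  - by case/andP: (disj_sep (withinP wL Hq) (out p Hp)).
  - by case/setDP: Hp => Hp _; case/setDP: Hq => Hq _; exact: match_disj HM Hp Hq Hne.
have I0 : L :&: (M :\: N) = set0.
  apply/setP => p; rewrite in_set0 in_setI; apply/negP => /andP [Hp Hq].
  by case/andP: (withinP wL Hp); case/andP: (out p Hq) => /negbTE ->.
have [M2 [HM2 sUM2]] := ext_maximal HU.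
have cM2 : #|M2| = matching_number e by case: (heq M2 HM2).
have h1 := subset_leq_card sUM2.
rewrite cardsU I0 cards0 subn0 cardsD (setIidPr sNM) cM2 -cM in h1.
have h2 := subset_leq_card sNM.
move: h1 h2; set a := #|L|; set b := #|M|; set c := #|N|. lia.
Qed.

Lemma comb S k l :
  equimatchable e -> (l < k)%N -> (k <= matching_number e)%N ->
  (forall L, is_matching e L -> #|L| = k -> ~~ withinb L S) ->
  exists N, [/\ is_matching e N, #|N| = l &
    forall L, is_matching e L -> #|L| = k -> ~~ withinb L (S :|: Vx N)].
Proof.
move=> heq hlk hk hS.
have P0 : is_matching e set0 && withinb set0 S.
  by rewrite match0; apply: withinI => p; rewrite in_set0.
case: (@arg_maxnP _ set0 (fun M => is_matching e M && withinb M S) (fun M => #|M|) P0)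
  => M0 /andP [HM0 wM0] maxM0.
have maxM0' : forall L', is_matching e L' -> withinb L' S -> (#|L'| <= #|M0|)%N.
  by move=> L' H1 H2; apply: (maxM0 L'); rewrite H1 H2.
have [M [[HM maxM] sM0M]] := ext_maximal HM0.
have cM : #|M| = matching_number e by case: (heq M (conj HM maxM)).
pose A := [set p in M | (p.1 \in S) || (p.2 \in S)].
have sAM : A \subset M by apply/subsetP => p; rewrite inE => /andP [].
have sM0A : M0 \subset A.
  apply/subsetP => p Hp; rewrite inE (subsetP sM0M p Hp) /=.
  by case/andP: (withinP wM0 Hp) => ->.
case: (leqP l #|A|) => HlA.
  case: (leqP l #|M0|) => Hlt.
    have [N [_ sNM0 cN]] : exists N, [/\ set0 \subset N, N \subset M0 & #|N| = l].
      by apply: subset_card; rewrite ?sub0set ?cards0.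
    exists N; split => //; first exact: match_sub HM0 sNM0.
    move=> L HL cL; apply/negP => wL; move: (hS L HL cL); apply/negP; apply/negPn.
    apply: withinI => p Hp; case/andP: (withinP wL Hp); rewrite !in_setU.
    have sub : forall v, v \in Vx N -> v \in S.
      move=> v /VxP [q Hq Hqv]; case/andP: (withinP wM0 (subsetP sNM0 q Hq)) => a b.
      by case/orP: Hqv => /eqP <-.
    by case/orP => [->|/sub ->]; case/orP => [->|/sub ->].
  have [N [sM0N sNA cN]] := @subset_card M0 A l sM0A (introT andP (conj (ltnW Hlt) HlA)).
  exists N; split => //; first exact: match_sub HM (subset_trans sNA sAM).
  move=> L HL cL; apply/negP => wL.
  have := crude HL wL _ sM0N wM0 maxM0'.
  rewrite cL cN leqNgt hlk => H.
  suff hh : forall p, p \in N -> (p.1 \in S) || (p.2 \in S) by move: (H hh).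
  by move=> p /(subsetP sNA); rewrite inE => /andP [].
have hlM : (l <= #|M|)%N by rewrite cM; apply: leq_trans (ltnW hlk) hk.
have [N [sAN sNM cN]] := @subset_card A M l sAM (introT andP (conj (ltnW HlA) hlM)).
exists N; split => //; first exact: match_sub HM sNM.
move=> L HL cL; apply/negP => wL.
have := unionb heq HM cM sNM _ HL wL.
rewrite cL cN leqNgt hlk => H.
suff hh : forall p, p \in M -> (p.1 \in S) || (p.2 \in S) -> p \in N by move: (H hh).
by move=> p Hp H'; apply: (subsetP sAN); rewrite inE Hp H'.
Qed.

End C.

End CombM.
Import CombM.

Module MainM.
Local Open Scope ring_scope.

Section Main.
Variable K : fieldType.
Variable n : nat.
Variable e : rel 'I_n.

Lemma covP (M : {set 'I_n * 'I_n}) (v : 'I_n) : (0 < cov M v)%N = (v \in Vx M).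
Proof.
rewrite /cov lt0b; apply/hasP/VxP => -[p Hp H]; exists p => //; move: Hp; by rewrite mem_enum.
Qed.

Lemma cov_le (M : {set 'I_n * 'I_n}) (a : nat -> nat) :
  (forall p, p \in M -> (0 < a p.1)%N && (0 < a p.2)%N) -> forall j, (cov M j <= a j)%N.
Proof.
move=> H j; rewrite /cov; case: hasP => [[p Hp /orP [/eqP <-|/eqP <-]]|_] //;
  rewrite mem_enum in Hp; by case/andP: (H p Hp).
Qed.

Lemma sum_nz (I : finType) (P : pred I) (F : I -> K) :
  \sum_(i | P i) F i != 0 -> exists i, P i /\ F i != 0.
Proof.
move=> H; apply: NNPP => H'; move: H; rewrite big1 ?eqxx // => i Pi.
by apply/eqP; apply/negPn/negP => Fi; apply: H'; exists i.
Qed.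

Lemma sqf_add k (f g : mpoly K n) : in_sqf_power e k f -> in_sqf_power e k g ->
  in_sqf_power e k (f + g).
Proof.
move=> [c1 ->] [c2 ->]; exists (fun M => c1 M + c2 M).
by rewrite -big_split; apply: eq_bigr => M _; rewrite mulrDl.
Qed.

Lemma sqf_gen k (M : {set 'I_n * 'I_n}) (g : mpoly K n) :
  is_matching e M -> #|M| = k -> in_sqf_power e k (g * matching_monomial K M).
Proof.
move=> HM cM; exists (fun M' => if M' == M then g else 0).
rewrite (bigD1 M) /=; last by rewrite HM cM eqxx.
rewrite eqxx big1 ?addr0 // => M' /andP [_ /negbTE ->]; by rewrite mul0r.
Qed.

Theorem main (heq : equimatchable e) (k l : nat)
  (hlk : (l < k)%N) (hk : (k <= matching_number e)%N) :
  forall f : mpoly K n, in_colon e k l f <-> in_sqf_power e k f.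
Proof.
move=> f; split; last first.
  move=> [c ->] g _; exists (fun M => c M * g).
  rewrite mulr_suml; apply: eq_bigr => M _; by rewrite mulrAC.
move=> hcol.
pose P (a : nat -> nat) := exists M, [/\ is_matching e M, #|M| = k &
  forall p, p \in M -> (0 < a p.1)%N && (0 < a p.2)%N].
suff : mspan P f.
  elim => [|c a [M [HM cM Ha]]|g h _ Hg _ Hh].
  - exists (fun _ => 0); rewrite big1 // => M _; by rewrite mul0r.
  - have -> : mon K n a = mon K n (fun j => a j - cov M j)%N * matching_monomial K M.
      rewrite (@mm_mon _ _ K _ HM) -mon_add; apply: mon_ext => j _; by rewrite subnK // cov_le.
    rewrite mulrA; exact: sqf_gen.
  - exact: sqf_add.
apply: span_of_coef => a Ha.
apply: NNPP => nP.
pose S := [set j : 'I_n | (0 < a j)%N].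
have hS : forall L, is_matching e L -> #|L| = k -> ~~ withinb L S.
  move=> L HL cL; apply/negP => wL; apply: nP; exists L; split => //.
  move=> p Hp; case/andP: (withinP wL Hp); by rewrite !inE => -> ->.
have [N [HN cN hN]] := comb heq hlk hk hS.
have hg : in_sqf_power e l (matching_monomial K N).
  by rewrite -[matching_monomial _ _]mul1r; exact: sqf_gen.
have [c Hc] := hcol _ hg.
pose b := fun j => (a j + cov N j)%N.
have nz : coefm (f * matching_monomial K N) b != 0.
  rewrite (@mm_mon _ _ K _ HN) coefm_mul_mon; last by move=> j _; rewrite leq_addl.
  by rewrite (@coefm_ext _ _ _ _ a) // => j _; rewrite /b addnK.
rewrite Hc coefm_sum in nz.
have [M [/andP [HM /eqP cM] nzM]] := sum_nz nz.
rewrite (@mm_mon _ _ K _ HM) in nzM.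
have hle := coefm_mul_mon_nz nzM.
move: (hN M HM cM) => /negP; apply; apply: withinI => p Hp.
have key : forall v : 'I_n, v \in Vx M -> v \in S :|: Vx N.
  move=> v Hv; have := hle v (ltn_ord v); rewrite /b.
  rewrite in_setU inE -covP; move: Hv; rewrite -covP.
  move=> h1 h2; case: (posnP (a v)) => [E|//]; rewrite /=.
  rewrite E add0n in h2; exact: leq_trans h1 h2.
by rewrite !key //; apply/VxP; exists p; rewrite ?eqxx ?orbT.
Qed.

End Main.

End MainM.
Import MainM.


Theorem corollary6p6 (K : fieldType) (n : nat) (e : rel 'I_n)
  (hG : simple_graph e) (heq : equimatchable e) (k l : nat)
  (hl : (1 <= l)%N) (hlk : (l < k)%N) (hk : (k <= matching_number e)%N) :
  forall f : mpoly K n, in_colon e k l f <-> in_sqf_power e k f.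
Proof. exact: (main heq hlk hk). Qed.
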